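(* Let $(\mathcal G,\lambda)$ be a small morphism-colored groupoid satisfying the inverse-compatibility condition, and let $I_1$ be the image of $\lambda$. Then the relation $\overset{1}{\sim}$ on $I_1$ is an equivalence relation.
   Context: A morphism-colored category is a pair $(\mathcal C,\lambda)$ where $\mathcal C$ is a category and $\lambda$ assigns to each morphism $f$ a color $\lambda(f)$, such that: whenever $g,f_1,f_2$ with $(f_1,f_2)$ composable satisfy $\lambda(g)=\lambda(f_1\circ f_2)$, there exist composable $g_1,g_2$ with $g=g_1\circ g_2$, $\lambda(g_1)=\lambda(f_1)$, $\lambda(g_2)=\lambda(f_2)$. It is a morphism-colored groupoid if $\mathcal C$ is a groupoid, and small if $\mathcal C$ is small and $\lambda$ is a map into a set. Inverse-compatibility: $\lambda(f)=\lambda(g)$ implies $\lambda(f^{-1})=\lambda(g^{-1})$. The relation $\overset{1}{\sim}$ on $I_1=\lambda(\mathrm{Mor}(\mathcal G))$: for every $l\ge1$ and every pair of composable sequences $(f_1,\dots,f_l)$, $(g_1,\dots,g_l)$ of morphisms of $\mathcal G$ with $\lambda(f_i)=\lambda(g_i)$ for $i=1,\dots,l$, declare $\lambda(f_1\circ\cdots\circ f_l)\overset{1}{\sim}\lambda(g_1\circ\cdots\circ g_l)$; no other pairs are related. *)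

(* Defs.v *)
From Stdlib Require Import List RelationClasses.
Import ListNotations.
Set Implicit Arguments.

Record SmallGroupoid := {
  Obj : Type;
  Hom : Obj -> Obj -> Type;
  comp : forall a b c, Hom b c -> Hom a b -> Hom a c;
  idm : forall a, Hom a a;
  inv : forall a b, Hom a b -> Hom b a;
  comp_assoc : forall a b c d (f : Hom a b) (g : Hom b c) (h : Hom c d),
      comp h (comp g f) = comp (comp h g) f;
  comp_id_l : forall a b (f : Hom a b), comp (idm b) f = f;
  comp_id_r : forall a b (f : Hom a b), comp f (idm a) = f;
  inv_l : forall a b (f : Hom a b), comp (inv f) f = idm a;
  inv_r : forall a b (f : Hom a b), comp f (inv f) = idm b
}.

Arguments comp {s a b c} _ _.
Arguments inv {s a b} _.

Definition coloring (G : SmallGroupoid) (I : Type) :=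
  forall a b : Obj G, Hom G a b -> I.

Definition morphism_colored (G : SmallGroupoid) (I : Type) (lam : coloring G I) :=
  forall (a c : Obj G) (g : Hom G a c)
         (a' b' c' : Obj G) (f1 : Hom G b' c') (f2 : Hom G a' b'),
    lam _ _ g = lam _ _ (comp f1 f2) ->
    exists (b : Obj G) (g1 : Hom G b c) (g2 : Hom G a b),
      g = comp g1 g2 /\ lam _ _ g1 = lam _ _ f1 /\ lam _ _ g2 = lam _ _ f2.

Definition inverse_compatible (G : SmallGroupoid) (I : Type) (lam : coloring G I) :=
  forall (a b a' b' : Obj G) (f : Hom G a b) (g : Hom G a' b'),
    lam _ _ f = lam _ _ g -> lam _ _ (inv f) = lam _ _ (inv g).

(** Nonempty composable sequences (f1, ..., fl), l >= 1, from a to b: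
    [pcons f1 p] with p a composable sequence (f2,...,fl) ending where f1 starts. *)
Inductive cpath (G : SmallGroupoid) : Obj G -> Obj G -> Type :=
| psingle : forall a b, Hom G a b -> cpath G a b
| pcons : forall a b c, Hom G b c -> cpath G a b -> cpath G a c.

Arguments psingle {G a b} _.
Arguments pcons {G a b c} _ _.

Fixpoint pcomp (G : SmallGroupoid) (a b : Obj G) (p : cpath G a b) : Hom G a b :=
  match p with
  | psingle f => f
  | pcons f q => comp f (pcomp q)
  end.

Fixpoint pcolors (G : SmallGroupoid) (I : Type) (lam : coloring G I)
    (a b : Obj G) (p : cpath G a b) : list I :=
  match p with
  | psingle f => [lam _ _ f]
  | pcons f q => lam _ _ f :: pcolors lam q
  end.

Definition image1 (G : SmallGroupoid) (I : Type) (lam : coloring G I) : Type :=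
  { x : I | exists (a b : Obj G) (f : Hom G a b), lam a b f = x }.

Definition sim1 (G : SmallGroupoid) (I : Type) (lam : coloring G I)
    (x y : image1 lam) : Prop :=
  exists (a b a' b' : Obj G) (p : cpath G a b) (q : cpath G a' b'),
    pcolors lam p = pcolors lam q /\
    lam _ _ (pcomp p) = proj1_sig x /\ lam _ _ (pcomp q) = proj1_sig y.

(* Main.v *)
Require Import Defs.
From Stdlib Require Import List RelationClasses ClassicalEpsilon.
Import ListNotations.
Set Implicit Arguments.

Fixpoint papp {G : SmallGroupoid} {a b c : Obj G} (p : cpath G b c) : cpath G a b -> cpath G a c :=
  match p in cpath _ b' c' return cpath G a b' -> cpath G a c' with
  | psingle f => fun q => pcons f q
  | pcons f p' => fun q => pcons f (papp p' q)
  end.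

Fixpoint prev {G : SmallGroupoid} {a b : Obj G} (p : cpath G a b) : cpath G b a :=
  match p with
  | psingle f => psingle (inv f)
  | pcons f q => papp (prev q) (psingle (inv f))
  end.

Lemma pcomp_papp (G : SmallGroupoid) (a b c : Obj G) (p : cpath G b c) (q : cpath G a b) :
  pcomp (papp p q) = comp (pcomp p) (pcomp q).
Proof.
  induction p; simpl; auto.
  rewrite IHp. apply comp_assoc.
Qed.

Lemma pcolors_papp (G : SmallGroupoid) (I : Type) (lam : coloring G I)
  (a b c : Obj G) (p : cpath G b c) (q : cpath G a b) :
  pcolors lam (papp p q) = pcolors lam p ++ pcolors lam q.
Proof.
  induction p; simpl; auto. rewrite IHp; auto.
Qed.

Lemma inv_unique (G : SmallGroupoid) (a b : Obj G) (f : Hom G a b) (g : Hom G b a) :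
  comp g f = idm G a -> g = inv f.
Proof.
  intro H.
  rewrite <- (comp_id_r _ _ _ g).
  rewrite <- (inv_r _ _ _ f).
  rewrite comp_assoc. rewrite H. apply comp_id_l.
Qed.

Lemma inv_comp (G : SmallGroupoid) (a b c : Obj G) (g : Hom G b c) (f : Hom G a b) :
  inv (comp g f) = comp (inv f) (inv g).
Proof.
  symmetry. apply inv_unique.
  rewrite <- comp_assoc. rewrite (comp_assoc _ _ _ _ _ f g (inv g)).
  rewrite inv_l, comp_id_l. apply inv_l.
Qed.

Lemma pcomp_prev (G : SmallGroupoid) (a b : Obj G) (p : cpath G a b) :
  pcomp (prev p) = inv (pcomp p).
Proof.
  induction p; simpl; auto.
  rewrite pcomp_papp, IHp. simpl. symmetry. apply inv_comp.
Qed.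

Definition iota (G : SmallGroupoid) (I : Type) (lam : coloring G I) (c : I) : I :=
  epsilon (inhabits c) (fun d => exists (a b : Obj G) (f : Hom G a b),
     lam _ _ f = c /\ lam _ _ (inv f) = d).

Lemma iota_spec (G : SmallGroupoid) (I : Type) (lam : coloring G I)
  (Hinv : inverse_compatible lam) (a b : Obj G) (f : Hom G a b) :
  lam _ _ (inv f) = iota lam (lam _ _ f).
Proof.
  unfold iota.
  destruct (epsilon_spec (inhabits (lam a b f))
     (fun d => exists (a b : Obj G) (f0 : Hom G a b),
        lam _ _ f0 = lam _ _ f /\ lam _ _ (inv f0) = d)) as (a' & b' & f' & H1 & H2).
  { exists (lam _ _ (inv f)), a, b, f. auto. }
  rewrite <- H2. apply Hinv. auto.
Qed.

Definition winv (G : SmallGroupoid) (I : Type) (lam : coloring G I) (w : list I) :=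
  rev (map (iota lam) w).

Lemma pcolors_prev (G : SmallGroupoid) (I : Type) (lam : coloring G I)
  (Hinv : inverse_compatible lam) (a b : Obj G) (p : cpath G a b) :
  pcolors lam (prev p) = winv lam (pcolors lam p).
Proof.
  unfold winv. induction p; simpl.
  - rewrite (iota_spec Hinv). auto.
  - rewrite pcolors_papp, IHp. simpl. rewrite (iota_spec Hinv). auto.
Qed.

Lemma decomp (G : SmallGroupoid) (I : Type) (lam : coloring G I)
  (Hcol : morphism_colored lam) (a' b' : Obj G) (s : cpath G a' b') :
  forall (a b : Obj G) (g : Hom G a b), lam _ _ g = lam _ _ (pcomp s) ->
  exists r : cpath G a b, pcomp r = g /\ pcolors lam r = pcolors lam s.
Proof.
  induction s; intros a0 b0 g H; simpl in *.
  - exists (psingle g). simpl. rewrite H. auto.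
  - destruct (Hcol _ _ g _ _ _ _ _ H) as (m & g1 & g2 & E & E1 & E2).
    destruct (IHs _ _ g2 E2) as (r & R1 & R2).
    exists (pcons g1 r). simpl. rewrite R1, R2, E1. auto.
Qed.

Definition Rw (G : SmallGroupoid) (I : Type) (lam : coloring G I) (t : I) (w : list I) :=
  exists (a b : Obj G) (p : cpath G a b), lam _ _ (pcomp p) = t /\ pcolors lam p = w.

Lemma snoc_view (G : SmallGroupoid) (I : Type) (lam : coloring G I) (a b : Obj G) (p : cpath G a b) :
  (exists f : Hom G a b, p = psingle f) \/
  exists (m : Obj G) (p1 : cpath G m b) (f : Hom G a m),
    pcomp p = comp (pcomp p1) f /\ pcolors lam p = pcolors lam p1 ++ [lam _ _ f].
Proof.
  induction p.
  - left. eauto.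
  - right. destruct IHp as [[f E] | (m & p1 & f & E1 & E2)].
    + subst. exists b, (psingle h), f. simpl. auto.
    + exists m, (pcons h p1), f. simpl. rewrite E1, E2. split; auto.
      apply comp_assoc.
Qed.

Lemma pcolors_nonempty (G : SmallGroupoid) (I : Type) (lam : coloring G I) (a b : Obj G) (p : cpath G a b) :
  pcolors lam p <> [].
Proof. destruct p; simpl; discriminate. Qed.

Lemma L_left (G : SmallGroupoid) (I : Type) (lam : coloring G I)
  (Hcol : morphism_colored lam) (Hinv : inverse_compatible lam)
  {t y c : I} {T Z : list I} :
  Rw lam t (c :: T) -> Rw lam y (c :: T) -> Rw lam y Z ->
  Rw lam t (Z ++ winv lam T ++ T).
Proof.
  intros (a & b & p & Hp1 & Hp2) (a' & b' & q & Hq1 & Hq2) (a2 & b2 & z & Hz1 & Hz2).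
  destruct (decomp Hcol z _ _ (pcomp q) (eq_trans Hq1 (eq_sym Hz1))) as (r & Hr1 & Hr2).
  destruct p as [a b k | a m b k1 p2]; destruct q as [a' b' h | a' m' b' h1 q2];
    simpl in *; injection Hp2; injection Hq2; intros.
  - exists a', b', r. simpl. subst T. rewrite app_nil_r. split.
    + rewrite Hr1. congruence.
    + congruence.
  - exfalso. eapply (pcolors_nonempty lam q2). congruence.
  - exfalso. eapply (pcolors_nonempty lam p2). congruence.
  - assert (E : pcomp (papp r (prev q2)) = h1).
    { rewrite pcomp_papp, Hr1, pcomp_prev. simpl. rewrite <- comp_assoc, inv_r. apply comp_id_r. }
    assert (Hc : lam _ _ k1 = lam _ _ (pcomp (papp r (prev q2)))) by congruence.
    destruct (decomp Hcol _ _ _ _ Hc) as (s & Hs1 & Hs2).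
    exists a, b, (papp s p2). split.
    + rewrite pcomp_papp, Hs1. auto.
    + rewrite pcolors_papp, Hs2, pcolors_papp, (pcolors_prev Hinv), Hr2, <- app_assoc. congruence.
Qed.

Lemma L_right (G : SmallGroupoid) (I : Type) (lam : coloring G I)
  (Hcol : morphism_colored lam) (Hinv : inverse_compatible lam)
  {t y c : I} {T Z : list I} :
  Rw lam t (T ++ [c]) -> Rw lam y (T ++ [c]) -> Rw lam y Z ->
  Rw lam t (T ++ winv lam T ++ Z).
Proof.
  intros (a & b & p & Hp1 & Hp2) (a' & b' & q & Hq1 & Hq2) (a2 & b2 & z & Hz1 & Hz2).
  destruct (decomp Hcol z _ _ (pcomp q) (eq_trans Hq1 (eq_sym Hz1))) as (r & Hr1 & Hr2).
  destruct (snoc_view lam p) as [[k Ek] | (m & p1 & f & Ep1 & Ep2)];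
  destruct (snoc_view lam q) as [[h Eh] | (m' & q1 & g & Eq1 & Eq2)].
  - subst. simpl in *. destruct T as [|? [|]]; simpl in *; try discriminate.
    exists a', b', r. split; [rewrite Hr1; congruence | auto].
  - subst. simpl in *. rewrite Hq2 in Eq2.
    destruct T as [|? ?]; simpl in *; [|destruct T; discriminate].
    destruct (pcolors lam q1) eqn:Q; simpl in Eq2; [|destruct l; discriminate].
    destruct q1; simpl in Q; discriminate.
  - subst. simpl in *. rewrite Hp2 in Ep2.
    destruct T as [|? ?]; simpl in *; [|destruct T; discriminate].
    destruct (pcolors lam p1) eqn:Q; simpl in Ep2; [|destruct l; discriminate].
    destruct p1; simpl in Q; discriminate.
  - rewrite Hp2 in Ep2. rewrite Hq2 in Eq2.
    apply app_inj_tail in Ep2. apply app_inj_tail in Eq2.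
    destruct Ep2 as [Ep2 Ef]. destruct Eq2 as [Eq2 Eg].
    assert (E : pcomp (papp (prev q1) r) = g).
    { rewrite pcomp_papp, Hr1, pcomp_prev, Eq1, comp_assoc, inv_l. apply comp_id_l. }
    assert (Hc : lam _ _ f = lam _ _ (pcomp (papp (prev q1) r))) by congruence.
    destruct (decomp Hcol _ _ _ _ Hc) as (s & Hs1 & Hs2).
    exists a, b, (papp p1 s). split.
    + rewrite pcomp_papp, Hs1, <- Ep1. auto.
    + rewrite pcolors_papp, Hs2, pcolors_papp, (pcolors_prev Hinv), Hr2. congruence.
Qed.


Unset Implicit Arguments.
Theorem proposition3p5 (G : SmallGroupoid) (I : Type) (lam : coloring G I)
    (Hcol : morphism_colored lam) (Hinv : inverse_compatible lam) :
  Equivalence (@sim1 G I lam).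
Proof.
  split.
  - intros [x (a & b & f & E)]. exists a, b, a, b, (psingle f), (psingle f). simpl. auto.
  - intros x y (a & b & a' & b' & p & q & H1 & H2 & H3).
    exists a', b', a, b, q, p. auto.
  - intros x y z (a & b & a' & b' & p & q & H1 & H2 & H3)
                 (c & d & c' & d' & p' & q' & K1 & K2 & K3).
    set (W := pcolors lam p) in *. set (V := pcolors lam p') in *.
    assert (RxW : Rw lam (proj1_sig x) W) by (exists a, b, p; auto).
    assert (RyW : Rw lam (proj1_sig y) W) by (exists a', b', q; auto).
    assert (RyV : Rw lam (proj1_sig y) V) by (exists c, d, p'; auto).
    assert (RzV : Rw lam (proj1_sig z) V) by (exists c', d', q'; auto).
    assert (HW : W <> []) by apply pcolors_nonempty.
    assert (HV : V <> []) by apply pcolors_nonempty.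
    clearbody W V.
    destruct (exists_last HW) as (iW & wl & EW).
    destruct V as [|v1 tV]; [congruence|].
    set (U := iW ++ winv lam iW ++ W ++ winv lam tV ++ tV).
    assert (RxW' : Rw lam (proj1_sig x) (iW ++ [wl])) by (rewrite <- EW; auto).
    assert (RyW' : Rw lam (proj1_sig y) (iW ++ [wl])) by (rewrite <- EW; auto).
    assert (RyZ : Rw lam (proj1_sig y) (W ++ winv lam tV ++ tV))
      by exact (L_left Hcol Hinv RyV RyV RyW).
    assert (RxU : Rw lam (proj1_sig x) U)
      by exact (L_right Hcol Hinv RxW' RyW' RyZ).
    assert (RyZ' : Rw lam (proj1_sig y) (iW ++ winv lam iW ++ W))
      by exact (L_right Hcol Hinv RyW' RyW' RyW).
    assert (RzU : Rw lam (proj1_sig z) U).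
    { unfold U. replace (iW ++ winv lam iW ++ W ++ winv lam tV ++ tV)
        with ((iW ++ winv lam iW ++ W) ++ winv lam tV ++ tV)
        by (rewrite !app_assoc; reflexivity).
      exact (L_left Hcol Hinv RzV RyV RyZ'). }
    destruct RxU as (e1 & e2 & P & P1 & P2).
    destruct RzU as (e3 & e4 & Q & Q1 & Q2).
    exists e1, e2, e3, e4, P, Q. split; [congruence | auto].
Qed.
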